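(* For $n\ge 2$, $$(\mathfrak C_0+\mathfrak C_0+\mathfrak C_0+\mathfrak C_0+\mathfrak C_0)^n=\binom{2n-1}{4}\mathfrak C_{2n}+\frac{4n^2-16n+17}{3}\binom{2n}{2}\binom{2n-3}{2}\mathfrak C_{2n-2}+\binom{2n}{4}(2n-5)^4\mathfrak C_{2n-4}.$$
   Context: The numbers $\mathfrak C_{2n}$ (Cauchy numbers with level $2$) are defined by $\frac{t}{{\rm arcsinh}\,t}=\sum_{n=0}^\infty\mathfrak C_{2n}\frac{t^{2n}}{(2n)!}$. Convolution notation: $(\mathfrak C_{2j_1}+\cdots+\mathfrak C_{2j_k})^n:=\sum_{i_1+\cdots+i_k=n,\ i_1,\dots,i_k\ge0}\frac{(2n)!}{(2i_1)!\cdots(2i_k)!}\mathfrak C_{2i_1+2j_1}\cdots\mathfrak C_{2i_k+2j_k}$ (here with $k=5$ summands, all $j_i=0$). *)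

(* Defs.v *)
From mathcomp Require Import all_boot all_order all_algebra.
Set Implicit Arguments. Unset Strict Implicit. Unset Printing Implicit Defensive.
Import Order.TTheory GRing.Theory Num.Theory.
Local Open Scope ring_scope.

(* arcsinh t = \sum_k asinh_coef k * t^(2k+1), with
   asinh_coef k = (-1)^k (2k)! / (4^k (k!)^2 (2k+1)). *)
Definition asinh_coef (k : nat) : rat :=
  (-1) ^+ k * ((2 * k)`!)%:R / ((4 ^ k * (k`!) ^ 2 * (2 * k).+1)%N)%:R.

(* t / arcsinh t = 1 / (\sum_k asinh_coef k t^(2k)) = \sum_n b_n t^(2n)
   as formal power series in t^2 (asinh_coef 0 = 1), i.e.
   b_0 = 1 and \sum_(j=0)^n asinh_coef j * b_(n-j) = 0 for n >= 1.
   bseq n = [:: b_0; ...; b_n]. *)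
Fixpoint bseq (n : nat) : seq rat :=
  match n with
  | 0 => [:: 1]
  | n'.+1 =>
      let s := bseq n' in
      rcons s (- \sum_(j < n) asinh_coef j.+1 * nth 0 s (n' - j)%N)
  end.

(* Cauchy numbers with level 2: cauchy2 m = \mathfrak C_{2m}, so that
   t / arcsinh t = \sum_m cauchy2 m * t^(2m) / (2m)!. *)
Definition cauchy2 (m : nat) : rat := ((2 * m)`!)%:R * nth 0 (bseq m) m.

(* Convolution (C_{2 j_1} + ... + C_{2 j_k})^n :=
   \sum_{i_1+...+i_k = n} (2n)!/((2i_1)!...(2i_k)!) C_{2i_1+2j_1} ... C_{2i_k+2j_k}. *)
Definition cauchy2_conv (k : nat) (js : 'I_k -> nat) (n : nat) : rat :=
  \sum_(i : {ffun 'I_k -> 'I_n.+1} | (\sum_(l < k) (i l : nat))%N == n)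
     ((2 * n)`!)%:R / (\prod_(l < k) ((2 * i l)`!)%:R)
     * \prod_(l < k) cauchy2 (i l + js l)%N.

Example cauchy2_0 : cauchy2 0 = 1. Proof. by rewrite /cauchy2 /= mul1r. Qed.

(* Main.v *)
Require Import Defs.
From mathcomp Require Import all_boot all_order all_algebra.
Import Order.TTheory GRing.Theory Num.Theory.
Local Open Scope ring_scope.
From HB Require Import structures.
From mathcomp Require Import ring lra zify.

HB.lock Definition Eop (p : {poly rat}) : {poly rat} := 'X * p^`().

Lemma coef_Eop p i : (Eop p)`_i = i%:R * p`_i.
Proof.
rewrite Eop.unlock coefXM; case: i => [|i] /=; first by rewrite mul0r.
by rewrite coef_deriv mulr_natl.
Qed.

Lemma EopM p q : Eop (p * q) = Eop p * q + p * Eop q.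
Proof. rewrite Eop.unlock derivM; ring. Qed.

Lemma EopD p q : Eop (p + q) = Eop p + Eop q.
Proof. by rewrite Eop.unlock derivD mulrDr. Qed.

Lemma EopB p q : Eop (p - q) = Eop p - Eop q.
Proof. by rewrite Eop.unlock derivB mulrBr. Qed.

Lemma EopNg p : Eop (- p) = - Eop p.
Proof. by rewrite Eop.unlock derivN mulrN. Qed.

Lemma EopC (c : rat) : Eop c%:P = 0.
Proof. by rewrite Eop.unlock derivC mulr0. Qed.

Lemma Eop1 : Eop 1 = 0.
Proof. by rewrite -polyC1 EopC. Qed.

Lemma EopN (n : nat) : Eop n%:R = 0.
Proof. by rewrite -polyC_natr EopC. Qed.

Lemma EopX : Eop 'X = 'X.
Proof. by rewrite Eop.unlock derivX mulr1. Qed.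

Lemma EopNM (n : nat) p : Eop (n%:R * p) = n%:R * Eop p.
Proof. by rewrite EopM EopN mul0r add0r. Qed.

Lemma EopX2 p : Eop (p ^+ 2) = 2 * p * Eop p.
Proof. rewrite expr2 EopM; ring. Qed.

Lemma EopX3 p : Eop (p ^+ 3) = 3 * p ^+ 2 * Eop p.
Proof. rewrite (_ : p ^+ 3 = p ^+ 2 * p); last by ring.
rewrite EopM EopX2; ring. Qed.

Definition eqm0 (N : nat) (p : {poly rat}) := forall i, (i < N)%N -> p`_i = 0.

Lemma eqm0D N p q : eqm0 N p -> eqm0 N q -> eqm0 N (p + q).
Proof. by move=> hp hq i hi; rewrite coefD hp // hq // addr0. Qed.

Lemma eqm0B N p q : eqm0 N p -> eqm0 N q -> eqm0 N (p - q).
Proof. by move=> hp hq i hi; rewrite coefB hp // hq // subr0. Qed.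

Lemma eqm0Ml N r p : eqm0 N p -> eqm0 N (r * p).
Proof.
move=> hp i hi; rewrite coefM big1 // => j _.
rewrite hp ?mulr0 //; apply: leq_ltn_trans hi; exact: leq_subr.
Qed.

Lemma eqm0E N p : eqm0 N p -> eqm0 N (Eop p).
Proof. by move=> hp i hi; rewrite coef_Eop hp // mulr0. Qed.

Lemma eqm0_0 N : eqm0 N 0.
Proof. by move=> i _; rewrite coef0. Qed.

Lemma eqm0_eq N p q : p = q -> eqm0 N q -> eqm0 N p.
Proof. by move=> ->. Qed.

Notation bseq := Defs.bseq.
Definition bb m := nth 0 (bseq m) m.

Lemma size_bseq m : size (bseq m) = m.+1.
Proof. by elim: m => [|m IH] //=; rewrite size_rcons IH. Qed.

Lemma nth_bseq m j : (j <= m)%N -> nth 0 (bseq m) j = bb j.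
Proof.
elim: m j => [|m IH] j hj.
  by move: hj; rewrite leqn0 => /eqP ->.
case: (ltngtP j m.+1) hj => // [hlt _|-> _]; last by [].
rewrite /= nth_rcons size_bseq hlt; exact: IH.
Qed.

Lemma bb_rec m : bb m.+1 = - \sum_(j < m.+1) asinh_coef j.+1 * bb (m - j).
Proof.
rewrite {1}/bb /= nth_rcons size_bseq ltnn eqxx; congr (- _).
by apply: eq_bigr => j _; rewrite nth_bseq // leq_subr.
Qed.

Lemma a0 : asinh_coef 0 = 1.
Proof. by rewrite /asinh_coef expr0 mul1r /= muln0. Qed.

Lemma bb0 : bb 0 = 1.
Proof. by []. Qed.

Definition Apol N := \poly_(i < N) asinh_coef i.
Definition Bpol N := \poly_(i < N) bb i.

Lemma Q1 N : eqm0 N (Apol N * Bpol N - 1).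
Proof.
move=> i hi; rewrite coefB coefM coef1.
case: i hi => [|m] hi.
  by rewrite big_ord1 !coef_poly hi a0 bb0 mul1r subrr.
rewrite big_ord_recl /= subr0 !coef_poly hi (ltn_trans _ hi) // a0 mul1r bb_rec.
rewrite [X in _ + X](eq_bigr (fun j : 'I_m.+1 => asinh_coef j.+1 * bb (m - j))) ?addNr //.
move=> j _; rewrite /bump /= add1n subSS !coef_poly.
by rewrite (leq_ltn_trans (ltn_ord j) hi) (leq_ltn_trans (leq_subr _ _) (ltnW hi)).
Qed.


Definition Yc (i : nat) : rat := ((2 * i).+1)%:R * asinh_coef i.

Lemma Yc_closed i :
  Yc i = (-1) ^+ i * ((2 * i)%N`!)%:R / ((4 ^ i)%:R * (i`!)%:R ^+ 2).
Proof.
rewrite /Yc /asinh_coef !natrM natrX.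
have h1 : ((2 * i).+1)%:R != 0 :> rat by rewrite pnatr_eq0.
have h2 : (4 ^ i)%:R != 0 :> rat by rewrite pnatr_eq0 -lt0n expn_gt0.
have h3 : (i`!)%:R != 0 :> rat by rewrite pnatr_eq0 -lt0n fact_gt0.
field. rewrite h3 expf_neq0 //=; apply: lt0r_neq0.
have := ler0n rat i; lra.
Qed.

Lemma Yc_rec j : (2 * j.+1)%N%:R * Yc j.+1 = - ((2 * j).+1)%:R * Yc j.
Proof.
rewrite !Yc_closed.
have -> : (2 * j.+1)%N = (2 * j).+2 by rewrite mulnS.
rewrite !factS expnS exprS !natrM.
have h2 : (4 ^ j)%:R != 0 :> rat by rewrite pnatr_eq0 -lt0n expn_gt0.
have h3 : (j`!)%:R != 0 :> rat by rewrite pnatr_eq0 -lt0n fact_gt0.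
have h4 : (j.+1)%:R != 0 :> rat by rewrite pnatr_eq0.
rewrite (_ : ((2 * j).+2)%:R = 2 * (j.+1)%:R :> rat); last first.
  by rewrite -natrM mulnS.
field. rewrite h3 h2 /=; apply: lt0r_neq0.
have := ler0n rat j; lra.
Qed.

HB.lock Definition Ypol N := 2 * Eop (Apol N) + Apol N.

Lemma coef2 (p : {poly rat}) i : (2 * p)`_i = 2 * p`_i.
Proof. by rewrite -polyC_natr coefCM. Qed.

Lemma coefY N i : (i < N)%N -> (Ypol N)`_i = Yc i.
Proof.
move=> hi; rewrite Ypol.unlock coefD coef2 coef_Eop coef_poly hi /Yc.
rewrite -[X in X * asinh_coef i]natr1 natrM; ring.
Qed.

Lemma Yc0 : Yc 0 = 1.
Proof. by rewrite /Yc a0 mulr1. Qed.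

Lemma coefXM' (p : {poly rat}) i : ('X * p)`_i.+1 = p`_i.
Proof. by rewrite coefXM. Qed.

Definition Q2p N := (1 + 'X) * (2 * Eop (Ypol N)) + 'X * Ypol N.

Lemma Q2 N : eqm0 N (Q2p N).
Proof.
move=> i hi; rewrite /Q2p mulrDl mul1r !coefD !coefXM !coef2 !coef_Eop.
case: i hi => [|m] hi /=; first by rewrite mul0r mulr0 !addr0.
rewrite !coefY // ?(ltn_trans _ hi) //.
have := Yc_rec m; rewrite natrM => h.
rewrite mulrA h -natr1 natrM; ring.
Qed.

Definition Zpol N := (1 + 'X) * Ypol N ^+ 2 - 1.

Lemma Q3 N : eqm0 N (Zpol N).
Proof.
have hE : eqm0 N (Eop (Zpol N)).
  rewrite (_ : Eop (Zpol N) = Ypol N * Q2p N); first exact: eqm0Ml (Q2 N).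
  rewrite /Zpol /Q2p EopB Eop1 EopM EopD Eop1 EopX EopX2; ring.
move=> i hi; case: i hi => [|m] hi.
  rewrite /Zpol coefB coef1 /= coef0M expr2 coef0M coefD coef1 coefX /=.
  by rewrite addr0 !coefY // Yc0 !mul1r subrr.
have := hE m.+1 hi; rewrite coef_Eop => /eqP; rewrite mulf_eq0 pnatr_eq0 /=.
by move/eqP.
Qed.


Definition Dp N := 2 * Eop (Bpol N) - Bpol N + Ypol N * Bpol N ^+ 2.

Lemma QD N : eqm0 N (Dp N).
Proof.
have h1 := Q1 N.
have h1' : eqm0 N (Eop (Apol N) * Bpol N + Apol N * Eop (Bpol N)).
  rewrite -EopM -[X in eqm0 _ X]subr0 -Eop1 -EopB; exact: eqm0E.
rewrite (_ : Dp N = 2 * Bpol N * (Eop (Apol N) * Bpol N + Apol N * Eop (Bpol N))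
   + (Ypol N * Bpol N ^+ 2 - Dp N) * (Apol N * Bpol N - 1)).
  by apply: eqm0D; apply: eqm0Ml.
rewrite /Dp Ypol.unlock; ring.
Qed.

Lemma QED N : eqm0 N (Eop (Dp N)).
Proof. exact: eqm0E (QD N). Qed.

Lemma EDp N : Eop (Dp N) = 2 * Eop (Eop (Bpol N)) - Eop (Bpol N)
   + Eop (Ypol N) * Bpol N ^+ 2 + Ypol N * (2 * Bpol N * Eop (Bpol N)).
Proof. rewrite /Dp !(EopD, EopB, EopX2, EopX3, EopM, EopN, Eop1, EopNg); ring. Qed.

Definition T1 N := 2 * Bpol N ^+ 3 - ((1 + 'X) * (4 * Eop (Eop (Bpol N))
   - 6 * Eop (Bpol N) + 2 * Bpol N) + 'X * (2 * Eop (Bpol N) - Bpol N)).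

Lemma QT1 N : eqm0 N (T1 N).
Proof.
rewrite (_ : T1 N = -2 * (1 + 'X) * Eop (Dp N)
   + (2 * (1 + 'X) * (1 + Ypol N * Bpol N) - 'X) * Dp N
   - 2 * Bpol N ^+ 3 * Zpol N + Bpol N ^+ 2 * Q2p N).
  apply: eqm0D; last exact: eqm0Ml (Q2 N).
  apply: eqm0B; last exact: eqm0Ml (Q3 N).
  apply: eqm0D; last exact: eqm0Ml (QD N).
  exact: eqm0Ml (QED N).
rewrite EDp /T1 /Dp /Zpol /Q2p; ring.
Qed.

Definition Wp N := 2 * Eop (Bpol N ^+ 3) - 3 * Bpol N ^+ 3.

Definition T3 N := 12 * Bpol N ^+ 5 - ((1 + 'X) * (2 * Eop (Wp N) - 4 * Wp N)
   + 'X * Wp N).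

Lemma QT3 N : eqm0 N (T3 N).
Proof.
set B := Bpol N; set e := Eop B; set D := Dp N.
rewrite (_ : T3 N = - (1 + 'X) * (12 * B * e * D + 6 * B ^+ 2 * Eop D
   - 12 * Ypol N * B ^+ 3 * D - 12 * B ^+ 2 * D) - 3 * 'X * B ^+ 2 * D
   + 3 * B ^+ 4 * Q2p N - 12 * B ^+ 5 * Zpol N).
  apply: eqm0B; last exact: eqm0Ml (Q3 N).
  apply: eqm0D; last exact: eqm0Ml (Q2 N).
  apply: eqm0B; last exact: eqm0Ml (QD N).
  apply: eqm0Ml; apply: eqm0B; last exact: eqm0Ml (QD N).
  apply: eqm0B; last exact: eqm0Ml (QD N).
  apply: eqm0D; first exact: eqm0Ml (QD N).
  exact: eqm0Ml (QED N).
rewrite /T3 /Wp /D EDp /Dp /Zpol /Q2p -/B -/e.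
rewrite !(EopD, EopB, EopX2, EopX3, EopM, EopN, Eop1, EopNg).
rewrite {}/e {}/B; ring.
Qed.

Lemma coefn (n : nat) (p : {poly rat}) i : (n%:R * p)`_i = n%:R * p`_i.
Proof. by rewrite -polyC_natr coefCM. Qed.

Lemma coefB' N i : (i < N)%N -> (Bpol N)`_i = bb i.
Proof. by move=> hi; rewrite coef_poly hi. Qed.

Lemma coef_shape (P Q : {poly rat}) i :
  ((1 + 'X) * P + 'X * Q)`_i.+1 = P`_i.+1 + P`_i + Q`_i.
Proof. by rewrite mulrDl mul1r !coefD !coefXM'. Qed.

Lemma coefT1 N k : (k.+1 < N)%N ->
  2 * (Bpol N ^+ 3)`_k.+1 = (2 * k%:R + 1) * (2 * k%:R) * bb k.+1
     + (2 * k%:R - 1) ^+ 2 * bb k.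
Proof.
move=> hk; have := QT1 N k.+1 hk.
rewrite /T1 coefB coefn coef_shape !(coefB, coefD, coefn, coef_Eop).
rewrite !coefB' ?hk ?(ltnW hk) //.
move/eqP; rewrite subr_eq0 => /eqP ->; rewrite -natr1; ring.
Qed.

Lemma coefT3 N k : (k.+1 < N)%N ->
  12 * (Bpol N ^+ 5)`_k.+1 =
    (2 * k%:R - 2) * (2 * k%:R - 1) * (Bpol N ^+ 3)`_k.+1
     + (2 * k%:R - 3) ^+ 2 * (Bpol N ^+ 3)`_k.
Proof.
move=> hk; have := QT3 N k.+1 hk.
rewrite /T3 coefB coefn coef_shape /Wp !(coefB, coefD, coefn, coef_Eop).
move/eqP; rewrite subr_eq0 => /eqP ->; rewrite -natr1; ring.
Qed.


Lemma prod_scaleX (I : finType) (c : I -> rat) (e : I -> nat) :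
  \prod_(l : I) (c l *: 'X^(e l)) = (\prod_l c l) *: 'X^(\sum_l e l).
Proof.
under eq_bigr => l _ do rewrite -mul_polyC.
rewrite big_split /= -rmorph_prod prodrXr mul_polyC //.
Qed.

Lemma sum5 n :
  \sum_(i : {ffun 'I_5 -> 'I_n.+1} | (\sum_(l < 5) (i l : nat))%N == n)
     \prod_(l < 5) bb (i l) = (Bpol n.+1 ^+ 5)`_n.
Proof.
have -> : Bpol n.+1 ^+ 5 = \sum_(f : {ffun 'I_5 -> 'I_n.+1})
    (\prod_(l < 5) bb (f l)) *: 'X^(\sum_(l < 5) (f l : nat)).
  rewrite /Bpol poly_def -{1}[5%N]card_ord -prodr_const.
  rewrite (bigA_distr_bigA (fun (l : 'I_5) (j : 'I_n.+1) => bb j *: 'X^j)) /=.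
  by apply: eq_bigr => f _; rewrite prod_scaleX.
by rewrite coef_sumMXn.
Qed.

Lemma conv_eq n : cauchy2_conv (fun _ : 'I_5 => 0%N) n =
  ((2 * n)`!)%:R * (Bpol n.+1 ^+ 5)`_n.
Proof.
rewrite -sum5 mulr_sumr /cauchy2_conv; apply: eq_bigr => f _.
rewrite /cauchy2.
rewrite [X in _ * X](eq_bigr (fun l : 'I_5 => ((2 * f l)`!)%:R * bb (f l))); last first.
  by move=> l _; rewrite addn0.
rewrite big_split /= mulrA divfK //.
rewrite prodf_seq_neq0; apply/allP => l _ /=.
by rewrite pnatr_eq0 -lt0n fact_gt0.
Qed.


Lemma binr (m k : nat) : ('C(m, k))%:R = (m ^_ k)%:R / (k`!)%:R :> rat.
Proof.
rewrite -bin_ffact natrM mulfK // pnatr_eq0 -lt0n fact_gt0 //.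
Qed.

Lemma ffact4 (m : nat) : (m ^_ 4)%:R = m%:R * (m%:R - 1) * (m%:R - 2) * (m%:R - 3) :> rat.
Proof.
case: m => [|[|[|[|j]]]]; try by rewrite /= ?mul0r ?mulr0 //; ring.
rewrite !ffactnS ffactn0 /= !natrM -!natr1; ring.
Qed.

Lemma ffact2 (m : nat) : (m ^_ 2)%:R = m%:R * (m%:R - 1) :> rat.
Proof.
case: m => [|[|j]]; try by rewrite /= ?mul0r ?mulr0 //; ring.
rewrite !ffactnS ffactn0 /= !natrM -!natr1; ring.
Qed.

Theorem mainTheorem8 (n : nat) (hn : (2 <= n)%N) :
  cauchy2_conv (fun _ : 'I_5 => 0%N) n =
    ('C(2 * n - 1, 4))%:R * cauchy2 n
  + (4 * n%:R ^+ 2 - 16 * n%:R + 17) / 3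
      * ('C(2 * n, 2))%:R * ('C(2 * n - 3, 2))%:R * cauchy2 (n - 1)
  + ('C(2 * n, 4))%:R * (2 * n%:R - 5) ^+ 4 * cauchy2 (n - 2).
Proof.
case: n hn => [|[|k]] // _.
rewrite conv_eq.
have h3 := coefT3 k.+3 k.+1 (ltnSn k.+2).
have h1a := coefT1 k.+3 k.+1 (ltnSn k.+2).
have h1b := coefT1 k.+3 k (ltnW (ltnSn k.+2)).
set B5 := (Bpol k.+3 ^+ 5)`_k.+2 in h3 *.
set c2 := (Bpol k.+3 ^+ 3)`_k.+2 in h3 h1a.
set c1 := (Bpol k.+3 ^+ 3)`_k.+1 in h3 h1b.
rewrite (_ : B5 = (12 * B5) / 12); last by field.
rewrite h3 (_ : c2 = (2 * c2) / 2); last by field.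
rewrite h1a (_ : c1 = (2 * c1) / 2); last by field.
rewrite h1b.
rewrite /cauchy2 -/(bb k.+2).
have -> : (k.+2 - 1 = k.+1)%N by lia.
have -> : (k.+2 - 2 = k)%N by lia.
have -> : (2 * k.+2 - 1 = (2 * k).+3)%N by lia.
have -> : (2 * k.+2 - 3 = (2 * k).+1)%N by lia.
have -> : (2 * k.+2 = (2 * k).+4)%N by lia.
have -> : (2 * k.+1 = (2 * k).+2)%N by lia.
rewrite -/(bb k.+1) -/(bb k).
rewrite !binr !ffact4 !ffact2.
rewrite (_ : 4`! = 24)%N // (_ : 2`! = 2)%N //.
rewrite [(2*k).+4`!]factS [(2*k).+3`!]factS [(2*k).+2`!]factS [(2*k).+1`!]factS.
rewrite !natrM.
set F := ((2 * k)`!)%:R.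
rewrite -!natr1 !natrM.
by field.
Qed.
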